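(* Let $a,b>0$ and let $p$ be a point of the flat Klein bottle $K_{a,b}$. Let $\sigma$ be the union of the two main geodesics of $K_{a,b}$, and put $\lambda=2d(p,\sigma)/b$; then $\lambda\in[0,1/2]$. <ol> <li>Assume $b<2a$. If $\lambda=0$, then $\#F_p=\#F_p^4=1$. If $\lambda\neq 0$, then $\#F_p=\#F_p^3=2$.</li> <li>Assume $b=2a$. If $\lambda=0$ or $\lambda=1/2$, then $\#F_p=\#F_p^4=1$. Otherwise $\#F_p=\#F_p^3=2$.</li> <li>Assume $b>2a$, and put $\lambda_0=\frac12-\sqrt{\frac14-\frac{a^2}{b^2}}$. <ol> <li>If $\lambda=0$, then $\#F_p=\#F_p^4=1$.</li> <li>If $0<\lambda<\lambda_0$, then $\#F_p=\#F_p^3=2$.</li> <li>If $\lambda=\lambda_0$, then $\#F_p=\#F_p^4=1$.</li> <li>If $\lambda_0<\lambda<1/2$, then $\#F_p=\#F_p^3=1$.</li> <li>If $\lambda=1/2$, then $\#F_p=\#F_p^3=2$.</li> </ol> </li> </ol>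
   Context: For $a,b>0$, $K_{a,b}$ is the flat Klein bottle obtained from an $a\times b$ rectangle by two identifications: the sides of length $a$ are identified by translation, and the sides of length $b$ are identified by the point symmetry about the center of the rectangle. Equivalently, $K_{a,b}=\mathbb{R}^2/G$, where $G$ is generated by $(x,y)\mapsto(x,y+b)$ and $(x,y)\mapsto(x+a,-y)$. It carries the induced intrinsic distance $d$. The $a$-direction is called horizontal. The horizontal closed geodesics all have length $2a$, except two of length $a$, which are called the main geodesics: <ul> <li>the one coming from the $a$-long sides of the rectangle;</li> <li>the one coming from the mid-height horizontal segment of the rectangle.</li> </ul> In the quotient model, the main geodesics are the images of the lines $y=nb/2$, $n\in\mathbb{Z}$. For a point $p$, $F_p$ is the set of points at maximal distance from $p$. A segment is a shortest path. $F_p^n$ is the set of farthest points from $p$ joined to $p$ by exactly $n$ distinct segments. $\#$ denotes cardinality. *)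

(* Defs.v *)
From Stdlib Require Import Reals Lra ZArith List.
Open Scope R_scope.

(** The flat Klein bottle K_{a,b} = R^2 / G, where G is generated by
    (x,y) |-> (x, y+b) and (x,y) |-> (x+a, -y).  Every element of G is
    (x,y) |-> (x + m a, (-1)^m y + n b) for unique m n : Z. *)
Definition sgnZ (m : Z) (y : R) : R := if Z.even m then y else - y.

Definition actK (a b : R) (m n : Z) (u : R * R) : R * R :=
  (fst u + IZR m * a, sgnZ m (snd u) + IZR n * b).

Definition orbitK (a b : R) (v y : R * R) : Prop :=
  exists m n : Z, y = actK a b m n v.

(** Points of K_{a,b} are represented by points of R^2 (their lifts);
    two representatives denote the same point iff they are G-equivalent. *)
Definition equivK (a b : R) (u v : R * R) : Prop := orbitK a b u v.

Definition edist (u v : R * R) : R :=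
  sqrt ((fst u - fst v) ^ 2 + (snd u - snd v) ^ 2).

(** r is the intrinsic distance d([u],[v]) in K_{a,b}: the minimum of the
    Euclidean distances from u to the lifts of [v]. *)
Definition is_Kdist (a b : R) (u v : R * R) (r : R) : Prop :=
  (exists y, orbitK a b v y /\ edist u y = r) /\
  (forall y, orbitK a b v y -> r <= edist u y).

Definition is_glb (E : R -> Prop) (r : R) : Prop :=
  (forall x, E x -> r <= x) /\ (forall s, (forall x, E x -> s <= x) -> s <= r).

(** sigma = union of the two main geodesics = image of the lines y = n b/2. *)
Definition on_sigma (b : R) (q : R * R) : Prop :=
  exists n : Z, snd q = IZR n * b / 2.

Definition is_dsigma (a b : R) (p : R * R) (r : R) : Prop :=
  is_glb (fun x => exists q, on_sigma b q /\ is_Kdist a b p q x) r.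

Definition farthest (a b : R) (p q : R * R) : Prop :=
  exists r, is_Kdist a b p q r /\
    (forall q' r', is_Kdist a b p q' r' -> r' <= r).

Definition has_card {A : Type} (P : A -> Prop) (k : nat) : Prop :=
  exists l : list A, NoDup l /\ length l = k /\ (forall x, P x <-> In x l).

(** p and q are joined by exactly k distinct segments: the segments from p
    to q are the projections of the straight segments from the lift p to
    the lifts y of q realizing the distance d(p,q). *)
Definition nsegs (a b : R) (p q : R * R) (k : nat) : Prop :=
  exists r, is_Kdist a b p q r /\
    has_card (fun y => orbitK a b q y /\ edist p y = r) k.

Definition Fpk (a b : R) (p : R * R) (k : nat) (q : R * R) : Prop :=
  farthest a b p q /\ nsegs a b p q k.

(** The set of points of K_{a,b} whose lifts satisfy P (assumed
    G-invariant) has exactly N elements: there are N pairwise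
    non-equivalent representatives, covering every lift satisfying P. *)
Definition count_classes (a b : R) (P : R * R -> Prop) (N : nat) : Prop :=
  exists l : list (R * R),
    length l = N /\
    (forall u, In u l -> P u) /\
    ForallOrdPairs (fun u v => ~ equivK a b u v) l /\
    (forall u, P u -> exists v, In v l /\ equivK a b u v).

Definition Fcase (a b : R) (p : R * R) (N k : nat) : Prop :=
  count_classes a b (farthest a b p) N /\ count_classes a b (Fpk a b p k) N.

(* Main.v *)
Require Import Defs.
From Stdlib Require Import Reals Lra Psatz ZArith List Setoid.
Open Scope R_scope.

Definition d2 (u v : R * R) : R := (fst u - fst v) ^ 2 + (snd u - snd v) ^ 2.

Lemma edist_d2 u v : edist u v = sqrt (d2 u v).
Proof. reflexivity. Qed.

Lemma actK_comp a b m n m' n' v :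
  actK a b m n (actK a b m' n' v) =
  actK a b (m + m') (if Z.even m then n' + n else - n' + n) v.
Proof.
  destruct v as [x y]; unfold actK, sgnZ; simpl.
  rewrite Z.even_add.
  destruct (Z.even m), (Z.even m'); simpl; f_equal;
    rewrite ?plus_IZR, ?opp_IZR; ring.
Qed.

Lemma actK_00 a b v : actK a b 0 0 v = v.
Proof. destruct v; unfold actK, sgnZ; simpl; f_equal; ring. Qed.

Lemma orbit_refl a b v : orbitK a b v v.
Proof. exists 0%Z, 0%Z. now rewrite actK_00. Qed.

Lemma orbit_trans a b u v w : orbitK a b u v -> orbitK a b v w -> orbitK a b u w.
Proof.
  intros [m [n ->]] [m' [n' ->]].
  rewrite actK_comp. eexists; eexists; reflexivity.
Qed.

Lemma orbit_sym a b u v : orbitK a b u v -> orbitK a b v u.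
Proof.
  intros [m [n ->]].
  exists (- m)%Z, (if Z.even m then - n else n)%Z.
  rewrite actK_comp. rewrite Z.even_opp.
  replace (- m + m)%Z with 0%Z by lia.
  destruct (Z.even m);
  [replace (n + - n)%Z with 0%Z by lia | replace (- n + n)%Z with 0%Z by lia];
  now rewrite actK_00.
Qed.

Lemma orbit_act a b v m n : orbitK a b v (actK a b m n v).
Proof. exists m, n; reflexivity. Qed.

Lemma d2_act a b m n u v : d2 (actK a b m n u) (actK a b m n v) = d2 u v.
Proof.
  destruct u, v; unfold d2, actK, sgnZ; simpl.
  destruct (Z.even m); ring.
Qed.

Lemma edist_sym u v : edist u v = edist v u.
Proof. unfold edist; f_equal; ring. Qed.

Lemma d2_sym u v : d2 u v = d2 v u.
Proof. unfold d2; ring. Qed.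

Lemma act_move a b m n u w :
  exists m' n', d2 (actK a b m n u) w = d2 u (actK a b m' n' w).
Proof.
  destruct (orbit_sym a b u (actK a b m n u) (orbit_act a b u m n)) as [m' [n' E]].
  exists m', n'.
  rewrite <- (d2_act a b m' n'). rewrite <- E. reflexivity.
Qed.

Definition sR (s : bool) : R := if s then 1 else -1.

Definition Phi (b : R) (sx sy : bool) (t : R) (k : Z) (u : R * R) : R * R :=
  (sR sx * fst u + t, sR sy * snd u + IZR k * b / 2).

Definition goodpair a b (f g : R * R -> R * R) : Prop :=
  (forall u, f (g u) = u) /\ (forall u, g (f u) = u) /\
  (forall u v, edist (f u) (f v) = edist u v) /\
  (forall u v, edist (g u) (g v) = edist u v) /\
  (forall v y, orbitK a b v y -> orbitK a b (f v) (f y)) /\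
  (forall v y, orbitK a b v y -> orbitK a b (g v) (g y)) /\
  (forall q, on_sigma b q -> on_sigma b (f q)) /\
  (forall q, on_sigma b q -> on_sigma b (g q)).

Lemma goodpair_sym a b f g : goodpair a b f g -> goodpair a b g f.
Proof. unfold goodpair; tauto. Qed.

Lemma Phi_orbit a b sx sy t k v y :
  orbitK a b v y -> orbitK a b (Phi b sx sy t k v) (Phi b sx sy t k y).
Proof.
  intros [m [n ->]].
  exists (if sx then m else - m)%Z,
         (if Z.even m then (if sy then n else - n) else (if sy then n else - n) + k)%Z.
  destruct v as [x y]; unfold Phi, actK, sgnZ, sR; simpl.
  destruct sx; rewrite ?Z.even_opp; destruct (Z.even m), sy; simpl;
   f_equal; rewrite ?plus_IZR, ?opp_IZR; field.
Qed.

Lemma Phi_inv b sx sy t k u :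
  Phi b sx sy (- (sR sx * t)) (if sy then - k else k)%Z (Phi b sx sy t k u) = u.
Proof.
  destruct u; unfold Phi, sR; destruct sx, sy; simpl; f_equal;
  rewrite ?opp_IZR; field.
Qed.

Lemma Phi_inv' b sx sy t k u :
  Phi b sx sy t k (Phi b sx sy (- (sR sx * t)) (if sy then - k else k)%Z u) = u.
Proof.
  destruct u; unfold Phi, sR; destruct sx, sy; simpl; f_equal;
  rewrite ?opp_IZR; field.
Qed.

Lemma Phi_dist b sx sy t k u v :
  edist (Phi b sx sy t k u) (Phi b sx sy t k v) = edist u v.
Proof.
  destruct u, v; unfold edist, Phi, sR; destruct sx, sy; simpl; f_equal; ring.
Qed.

Lemma Phi_sigma b sx sy t k q : on_sigma b q -> on_sigma b (Phi b sx sy t k q).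
Proof.
  intros [n Hn]. exists ((if sy then n else - n) + k)%Z.
  destruct q; unfold Phi, sR; simpl in *; rewrite Hn.
  destruct sy; rewrite ?plus_IZR, ?opp_IZR; field.
Qed.

Lemma Phi_good a b sx sy t k :
  goodpair a b (Phi b sx sy t k) (Phi b sx sy (- (sR sx * t)) (if sy then - k else k)%Z).
Proof.
  repeat split; intros; auto using Phi_inv, Phi_inv', Phi_dist, Phi_orbit, Phi_sigma.
Qed.
Lemma tr_orbit a b f g : goodpair a b f g ->
  forall v w, orbitK a b (f v) (f w) <-> orbitK a b v w.
Proof.
  intros (fg & gf & fd & gd & fo & go & _) v w.
  split; intro H; [|now apply fo]. apply go in H. now rewrite !gf in H.
Qed.

Lemma tr_Kdist a b f g : goodpair a b f g ->
  forall u v r, is_Kdist a b (f u) (f v) r -> is_Kdist a b u v r.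
Proof.
  intros Gd u v r. pose proof Gd as (fg & gf & fd & gd & fo & go & _).
  intros [[w [Hw Hd]] H2]; split.
  - exists (g w). split.
    + rewrite <- (fg w) in Hw. now apply (tr_orbit a b f g Gd).
    + rewrite <- (fg w) in Hd. now rewrite fd in Hd.
  - intros w2 Hw2. rewrite <- fd. apply H2. now apply (tr_orbit a b f g Gd).
Qed.

Lemma tr_Kdist' a b f g : goodpair a b f g ->
  forall u v r, is_Kdist a b u v r -> is_Kdist a b (f u) (f v) r.
Proof.
  intros Gd u v r H. pose proof Gd as (fg & gf & _).
  apply (tr_Kdist a b g f (goodpair_sym _ _ _ _ Gd)). now rewrite !gf.
Qed.

Lemma tr_farthest a b f g : goodpair a b f g ->
  forall p q, farthest a b p q -> farthest a b (f p) (f q).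
Proof.
  intros Gd p q [r [H1 H2]]. pose proof Gd as (fg & gf & _).
  exists r. split; [now apply (tr_Kdist' a b f g)|].
  intros q' r' H. apply H2 with (g q').
  apply (tr_Kdist a b f g Gd). now rewrite fg.
Qed.

Lemma tr_has_card (f g : R * R -> R * R) (P P' : R * R -> Prop) k :
  (forall u, f (g u) = u) -> (forall u, g (f u) = u) ->
  (forall w, P' w <-> P (g w)) -> has_card P k -> has_card P' k.
Proof.
  intros fg gf E [l [Hn [Hl Hm]]].
  exists (map f l). split; [|split].
  - apply NoDup_map_NoDup_ForallPairs; auto.
    intros x y _ _ Hxy. rewrite <- (gf x), <- (gf y). now rewrite Hxy.
  - now rewrite length_map.
  - intros w. rewrite E, Hm. split; intro H.
    + rewrite <- (fg w). now apply in_map.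
    + apply in_map_iff in H. destruct H as [x [<- Hx]]. now rewrite gf.
Qed.

Lemma tr_nsegs a b f g : goodpair a b f g ->
  forall p q k, nsegs a b p q k -> nsegs a b (f p) (f q) k.
Proof.
  intros Gd p q k [r [H1 H2]]. pose proof Gd as (fg & gf & fd & gd & fo & go & _).
  exists r. split; [now apply (tr_Kdist' a b f g)|].
  eapply (tr_has_card f g _ _ k fg gf); [|exact H2].
  intros w. simpl.
  replace (orbitK a b (f q) w) with (orbitK a b (f q) (f (g w))) by now rewrite fg.
  replace (edist (f p) w) with (edist (f p) (f (g w))) by now rewrite fg.
  rewrite (tr_orbit a b f g Gd), fd. tauto.
Qed.

Lemma ForallOrdPairs_map {A B} (R1 : A -> A -> Prop) (R2 : B -> B -> Prop) (h : A -> B) l :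
  (forall x y, R1 x y -> R2 (h x) (h y)) -> ForallOrdPairs R1 l -> ForallOrdPairs R2 (map h l).
Proof.
  intros HR H; induction H; simpl; constructor; auto.
  apply Forall_map. eapply Forall_impl; [|eassumption]. auto.
Qed.

Lemma tr_count a b f g : goodpair a b f g ->
  forall (P P' : R * R -> Prop) N,
  (forall u, P u -> P' (f u)) -> (forall u, P' u -> P (g u)) ->
  count_classes a b P N -> count_classes a b P' N.
Proof.
  intros Gd P P' N H1 H2 [l [Hl [HP [Ho Hc]]]].
  pose proof Gd as (fg & gf & fd & gd & fo & go & _).
  exists (map f l). split; [|split; [|split]].
  - now rewrite length_map.
  - intros u Hu. apply in_map_iff in Hu. destruct Hu as [x [<- Hx]]. auto.
  - apply (ForallOrdPairs_map (fun u v => ~ equivK a b u v) _ f); auto.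
    intros x y Hxy Hf. apply Hxy. unfold equivK in *. now apply (tr_orbit a b f g Gd).
  - intros u Hu. destruct (Hc (g u) (H2 u Hu)) as [v [Hv He]].
    exists (f v). split; [now apply in_map|].
    unfold equivK in *. rewrite <- (fg u). now apply fo.
Qed.

Lemma tr_Fcase a b f g : goodpair a b f g ->
  forall p N k, Fcase a b p N k -> Fcase a b (f p) N k.
Proof.
  intros Gd p N k [H1 H2]. pose proof Gd as (fg & gf & _).
  pose proof (goodpair_sym _ _ _ _ Gd) as Gd'.
  split.
  - apply (tr_count a b f g Gd (farthest a b p) _ N); auto.
    + intros u Hu. now apply (tr_farthest a b f g Gd).
    + intros u Hu. rewrite <- (gf p). now apply (tr_farthest a b g f Gd').
  - apply (tr_count a b f g Gd (Fpk a b p k) _ N); auto.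
    + intros u [Hu1 Hu2]. split; [now apply (tr_farthest a b f g Gd)|now apply (tr_nsegs a b f g Gd)].
    + intros u [Hu1 Hu2]. rewrite <- (gf p). split;
      [now apply (tr_farthest a b g f Gd')|now apply (tr_nsegs a b g f Gd')].
Qed.

Lemma tr_dsigma a b f g : goodpair a b f g ->
  forall p r, is_dsigma a b p r -> is_dsigma a b (f p) r.
Proof.
  intros Gd p r. pose proof Gd as (fg & gf & fd & gd & fo & go & fs & gs).
  pose proof (goodpair_sym _ _ _ _ Gd) as Gd'.
  assert (E : forall x, (exists q, on_sigma b q /\ is_Kdist a b (f p) q x) <->
                        (exists q, on_sigma b q /\ is_Kdist a b p q x)).
  { intro x; split; intros [q [Hq Hk]].
    - exists (g q); split; auto. apply (tr_Kdist a b f g Gd). now rewrite fg.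
    - exists (f q); split; auto. now apply (tr_Kdist' a b f g Gd). }
  unfold is_dsigma, is_glb. intros [H1 H2]. split.
  - intros x Hx. apply H1. now apply E.
  - intros s Hs. apply H2. intros x Hx. apply Hs. now apply E.
Qed.
Lemma tri (x1 y1 x2 y2 x3 y3 vx vy rho2 qx qy : R) :
  (x1-vx)^2+(y1-vy)^2 = rho2 -> (x2-vx)^2+(y2-vy)^2 = rho2 -> (x3-vx)^2+(y3-vy)^2 = rho2 ->
  0 <= (x2-qx)*(y3-qy) - (y2-qy)*(x3-qx) ->
  0 <= (x3-qx)*(y1-qy) - (y3-qy)*(x1-qx) ->
  0 <= (x1-qx)*(y2-qy) - (y1-qy)*(x2-qx) ->
  0 < (x2-x1)*(y3-y1) - (y2-y1)*(x3-x1) ->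
  (qx-x1)^2+(qy-y1)^2 <= rho2 - ((qx-vx)^2+(qy-vy)^2) \/
  (qx-x2)^2+(qy-y2)^2 <= rho2 - ((qx-vx)^2+(qy-vy)^2) \/
  (qx-x3)^2+(qy-y3)^2 <= rho2 - ((qx-vx)^2+(qy-vy)^2).
Proof.
  intros H1 H2 H3 C1 C2 C3 O.
  set (c1 := (x2-qx)*(y3-qy) - (y2-qy)*(x3-qx)) in *.
  set (c2 := (x3-qx)*(y1-qy) - (y3-qy)*(x1-qx)) in *.
  set (c3 := (x1-qx)*(y2-qy) - (y1-qy)*(x2-qx)) in *.
  assert (Z : c1 * ((qx-x1)^2+(qy-y1)^2 - ((x1-vx)^2+(y1-vy)^2) + ((qx-vx)^2+(qy-vy)^2))
            + c2 * ((qx-x2)^2+(qy-y2)^2 - ((x2-vx)^2+(y2-vy)^2) + ((qx-vx)^2+(qy-vy)^2))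
            + c3 * ((qx-x3)^2+(qy-y3)^2 - ((x3-vx)^2+(y3-vy)^2) + ((qx-vx)^2+(qy-vy)^2)) = 0).
  { unfold c1, c2, c3. ring. }
  rewrite H1, H2, H3 in Z.
  assert (S : c1 + c2 + c3 = (x2-x1)*(y3-y1) - (y2-y1)*(x3-x1)) by (unfold c1, c2, c3; ring).
  destruct (Rle_dec ((qx-x1)^2+(qy-y1)^2) (rho2 - ((qx-vx)^2+(qy-vy)^2))) as [A|A]; [now left|].
  destruct (Rle_dec ((qx-x2)^2+(qy-y2)^2) (rho2 - ((qx-vx)^2+(qy-vy)^2))) as [B|B]; [now right; left|].
  destruct (Rle_dec ((qx-x3)^2+(qy-y3)^2) (rho2 - ((qx-vx)^2+(qy-vy)^2))) as [D|D]; [now right; right|].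
  exfalso.
  set (e1 := (qx-x1)^2+(qy-y1)^2 - rho2 + ((qx-vx)^2+(qy-vy)^2)) in *.
  set (e2 := (qx-x2)^2+(qy-y2)^2 - rho2 + ((qx-vx)^2+(qy-vy)^2)) in *.
  set (e3 := (qx-x3)^2+(qy-y3)^2 - rho2 + ((qx-vx)^2+(qy-vy)^2)) in *.
  assert (P1 : 0 < e1) by (unfold e1; lra).
  assert (P2 : 0 < e2) by (unfold e2; lra).
  assert (P3 : 0 < e3) by (unfold e3; lra).
  assert (Q1 : 0 <= c1 * e1) by (apply Rmult_le_pos; lra).
  assert (Q2 : 0 <= c2 * e2) by (apply Rmult_le_pos; lra).
  assert (Q3 : 0 <= c3 * e3) by (apply Rmult_le_pos; lra).
  assert (c1 * e1 = 0) by lra. assert (c2 * e2 = 0) by lra. assert (c3 * e3 = 0) by lra.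
  assert (c1 = 0) by (destruct (Rmult_integral _ _ H); lra).
  assert (c2 = 0) by (destruct (Rmult_integral _ _ H0); lra).
  assert (c3 = 0) by (destruct (Rmult_integral _ _ H4); lra).
  lra.
Qed.
Ltac act_tac := unfold actK, sgnZ; simpl; f_equal; ring.

Lemma coverA_rect a b y0 X x y :
  0 < a -> 0 < b -> 0 <= y0 -> y0 <= b / 4 ->
  2 * a * X = a ^ 2 - 2 * y0 * (b - 2 * y0) -> 0 <= X ->
  0 <= x <= a -> y0 <= y <= y0 + b ->
  exists P V, (exists m n, P = actK a b m n (0, y0)) /\
     (V = (a - X, b / 2 - y0) \/ V = (X, y0 + b / 2) \/ V = (a - X, 3 * b / 2 - y0)) /\
     d2 (x, y) P <= X ^ 2 + b ^ 2 / 4 - d2 (x, y) V.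
Proof.
  intros Ha Hb Hy0 Hy0' HX HX0 [Hx1 Hx2] [Hy1 Hy2].
  unfold d2; simpl.
  destruct (Rle_dec 0 ((a-x)*(y0-y) + x*(b-y0-y))) as [T1|T1].
  - destruct (tri 0 y0 a (-y0) a (b-y0) (a-X) (b/2-y0) (X ^ 2 + b ^ 2 / 4) x y)
      as [H|[H|H]]; try nra.
    + exists (0, y0), (a - X, b / 2 - y0). split; [exists 0%Z, 0%Z; act_tac|]. split; [tauto|]. simpl; lra.
    + exists (a, -y0), (a - X, b / 2 - y0). split; [exists 1%Z, 0%Z; act_tac|]. split; [tauto|]. simpl; lra.
    + exists (a, b-y0), (a - X, b / 2 - y0). split; [exists 1%Z, 1%Z; act_tac|]. split; [tauto|]. simpl; lra.
  - destruct (Rle_dec 0 ((a-x)*(y0+b-y) + x*(b-y0-y))) as [T2|T2].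
    + destruct (tri 0 y0 a (b-y0) 0 (y0+b) X (y0+b/2) (X ^ 2 + b ^ 2 / 4) x y)
        as [H|[H|H]]; try nra.
      * exists (0, y0), (X, y0 + b / 2). split; [exists 0%Z, 0%Z; act_tac|]. split; [tauto|]. simpl; lra.
      * exists (a, b-y0), (X, y0 + b / 2). split; [exists 1%Z, 1%Z; act_tac|]. split; [tauto|]. simpl; lra.
      * exists (0, y0+b), (X, y0 + b / 2). split; [exists 0%Z, 1%Z; act_tac|]. split; [tauto|]. simpl; lra.
    + destruct (tri 0 (y0+b) a (b-y0) a (2*b-y0) (a-X) (3*b/2-y0) (X ^ 2 + b ^ 2 / 4) x y)
        as [H|[H|H]]; try nra.
      * exists (0, y0+b), (a - X, 3 * b / 2 - y0). split; [exists 0%Z, 1%Z; act_tac|]. split; [tauto|]. simpl; lra.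
      * exists (a, b-y0), (a - X, 3 * b / 2 - y0). split; [exists 1%Z, 1%Z; act_tac|]. split; [tauto|]. simpl; lra.
      * exists (a, 2*b-y0), (a - X, 3 * b / 2 - y0). split; [exists 1%Z, 2%Z; act_tac|]. split; [tauto|]. simpl; lra.
Qed.
Lemma coverB_rect a b y0 RW RW' x y :
  0 < a -> 0 < b -> 0 < y0 -> y0 <= b / 4 ->
  2 * (b - 2 * y0) * RW = a ^ 2 + (b - 2 * y0) ^ 2 ->
  4 * y0 * RW' = a ^ 2 + 4 * y0 ^ 2 ->
  0 <= x <= a -> y0 <= y <= y0 + b ->
  exists P V rho2, (exists m n, P = actK a b m n (0, y0)) /\
     ((V = (a, b - y0 - RW) /\ rho2 = RW ^ 2) \/ (V = (0, y0 + RW) /\ rho2 = RW ^ 2) \/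
      (V = (0, y0 + b - RW') /\ rho2 = RW' ^ 2) \/ (V = (a, b - y0 + RW') /\ rho2 = RW' ^ 2)) /\
     d2 (x, y) P <= rho2 - d2 (x, y) V.
Proof.
  intros Ha Hb Hy0 Hy0' HW HW' [Hx1 Hx2] [Hy1 Hy2].
  unfold d2; simpl.
  destruct (Rle_dec 0 ((a-x)*(y0-y) + x*(b-y0-y))) as [T1|T1].
  - destruct (tri 0 y0 (2*a) y0 a (b-y0) a (b-y0-RW) (RW ^ 2) x y)
      as [H|[H|H]]; try nra.
    + exists (0, y0), (a, b - y0 - RW), (RW ^ 2). split; [exists 0%Z, 0%Z; act_tac|]. split; [tauto|]. simpl; lra.
    + exists (2*a, y0), (a, b - y0 - RW), (RW ^ 2). split; [exists 2%Z, 0%Z; act_tac|]. split; [tauto|]. simpl; lra.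
    + exists (a, b-y0), (a, b - y0 - RW), (RW ^ 2). split; [exists 1%Z, 1%Z; act_tac|]. split; [tauto|]. simpl; lra.
  - destruct (Rle_dec 0 (b - y0 - y)) as [T3|T3].
    + destruct (tri 0 y0 a (b-y0) (-a) (b-y0) 0 (y0+RW) (RW ^ 2) x y)
        as [H|[H|H]]; try nra.
      * exists (0, y0), (0, y0 + RW), (RW ^ 2). split; [exists 0%Z, 0%Z; act_tac|]. split; [tauto|]. simpl; lra.
      * exists (a, b-y0), (0, y0 + RW), (RW ^ 2). split; [exists 1%Z, 1%Z; act_tac|]. split; [tauto|]. simpl; lra.
      * exists (-a, b-y0), (0, y0 + RW), (RW ^ 2). split; [exists (-1)%Z, 1%Z; act_tac|]. split; [tauto|]. simpl; lra.
    + destruct (Rle_dec 0 ((a-x)*(y0+b-y) + x*(b-y0-y))) as [T2|T2].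
      * destruct (tri 0 (y0+b) (-a) (b-y0) a (b-y0) 0 (y0+b-RW') (RW' ^ 2) x y)
          as [H|[H|H]]; try nra.
        -- exists (0, y0+b), (0, y0 + b - RW'), (RW' ^ 2). split; [exists 0%Z, 1%Z; act_tac|]. split; [tauto|]. simpl; lra.
        -- exists (-a, b-y0), (0, y0 + b - RW'), (RW' ^ 2). split; [exists (-1)%Z, 1%Z; act_tac|]. split; [tauto|]. simpl; lra.
        -- exists (a, b-y0), (0, y0 + b - RW'), (RW' ^ 2). split; [exists 1%Z, 1%Z; act_tac|]. split; [tauto|]. simpl; lra.
      * destruct (tri 0 (y0+b) a (b-y0) (2*a) (y0+b) a (b-y0+RW') (RW' ^ 2) x y)
          as [H|[H|H]]; try nra.
        -- exists (0, y0+b), (a, b - y0 + RW'), (RW' ^ 2). split; [exists 0%Z, 1%Z; act_tac|]. split; [tauto|]. simpl; lra.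
        -- exists (a, b-y0), (a, b - y0 + RW'), (RW' ^ 2). split; [exists 1%Z, 1%Z; act_tac|]. split; [tauto|]. simpl; lra.
        -- exists (2*a, y0+b), (a, b - y0 + RW'), (RW' ^ 2). split; [exists 2%Z, 1%Z; act_tac|]. split; [tauto|]. simpl; lra.
Qed.
Lemma fl (c d : R) : 0 < d -> exists k : Z, 0 <= c + IZR k * d <= d.
Proof.
  intros Hd. destruct (archimed (- c / d)) as [H1 H2].
  exists (up (- c / d)).
  set (K := IZR (up (- c / d))) in *.
  assert (E : c = - (- c / d) * d) by (field; lra).
  set (z := - c / d) in *.
  rewrite E. split; nra.
Qed.

Lemma rect_red a b y0 q : 0 < a -> 0 < b ->
  exists m n, 0 <= fst (actK a b m n q) <= a /\ y0 <= snd (actK a b m n q) <= y0 + b.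
Proof.
  intros Ha Hb. destruct (fl (fst q) a Ha) as [m Hm].
  destruct (fl (sgnZ m (snd q) - y0) b Hb) as [n Hn].
  exists m, n. unfold actK; simpl. split; lra.
Qed.

Lemma sqrt_le_R (x r : R) : 0 <= r -> x <= r ^ 2 -> sqrt x <= r.
Proof.
  intros H1 H2. rewrite <- (sqrt_pow2 r H1). apply sqrt_le_1_alt. exact H2.
Qed.

Lemma R_le_sqrt (x r : R) : 0 <= x -> 0 <= r -> r <= sqrt x -> r ^ 2 <= x.
Proof.
  intros Hx H1 H2. pose proof (sqrt_sqrt x Hx). pose proof (sqrt_pos x). nra.
Qed.

Lemma cover_gen a b y0 Rr (cands : list (R * R)) (good : R * R -> R -> Prop) :
  0 < a -> 0 < b -> 0 <= Rr ->
  (forall V rho2, good V rho2 -> rho2 <= Rr ^ 2 /\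
      (rho2 = Rr ^ 2 -> exists v, In v cands /\ orbitK a b V v)) ->
  (forall x y, 0 <= x <= a -> y0 <= y <= y0 + b ->
     exists P V rho2, (exists m n, P = actK a b m n (0, y0)) /\ good V rho2 /\
       d2 (x, y) P <= rho2 - d2 (x, y) V) ->
  forall q, (exists w, orbitK a b q w /\ edist (0, y0) w <= Rr) /\
    ((forall w, orbitK a b q w -> Rr <= edist (0, y0) w) ->
       exists v, In v cands /\ equivK a b q v).
Proof.
  intros Ha Hb HR Hgood RC q.
  destruct (rect_red a b y0 q Ha Hb) as [m [n [Hx Hy]]].
  set (q' := actK a b m n q) in *.
  destruct (RC (fst q') (snd q') Hx Hy) as [P [V [rho2 [[m1 [n1 HP]] [Hg Hd]]]]].
  rewrite <- surjective_pairing in Hd.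
  destruct (Hgood V rho2 Hg) as [Hr1 Hr2].
  destruct (act_move a b m1 n1 (0, y0) q') as [m' [n' Em]].
  assert (Oq' : orbitK a b q q') by apply orbit_act.
  clearbody q'.
  assert (Oq : orbitK a b q (actK a b m' n' q')).
  { apply orbit_trans with q'; [exact Oq'|apply orbit_act]. }
  assert (D : d2 (0, y0) (actK a b m' n' q') <= rho2 - d2 q' V).
  { rewrite <- Em, <- HP, d2_sym. exact Hd. }
  assert (D0 : 0 <= d2 q' V) by (unfold d2; apply Rplus_le_le_0_compat; apply pow2_ge_0).
  split.
  - exists (actK a b m' n' q'). split; [exact Oq|].
    rewrite edist_d2. apply sqrt_le_R; lra.
  - intros Hall. specialize (Hall _ Oq). rewrite edist_d2 in Hall.
    apply R_le_sqrt in Hall; [|unfold d2; apply Rplus_le_le_0_compat; apply pow2_ge_0|lra].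
    assert (E1 : rho2 = Rr ^ 2) by lra.
    assert (E2 : d2 q' V = 0) by lra.
    destruct (Hr2 E1) as [v [Hv Ov]].
    exists v. split; [exact Hv|].
    assert (q' = V).
    { destruct q' as [q1 q2], V as [v1 v2]. unfold d2 in E2; simpl in E2.
      pose proof (pow2_ge_0 (q1 - v1)). pose proof (pow2_ge_0 (q2 - v2)).
      f_equal; nra. }
    unfold equivK. apply orbit_trans with q'; [exact Oq'|]. congruence.
Qed.
Lemma actK_inj a b m n m' n' v : 0 < a -> 0 < b ->
  actK a b m n v = actK a b m' n' v -> m = m' /\ n = n'.
Proof.
  intros Ha Hb E. unfold actK in E. injection E as E1 E2.
  assert (IZR m = IZR m') by (apply Rmult_eq_reg_r with a; lra).
  apply eq_IZR in H. subst m'. split; auto.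
  assert (IZR n = IZR n') by (apply Rmult_eq_reg_r with b; lra).
  now apply eq_IZR.
Qed.

Lemma seg_gen a b p v r (L : list (Z * Z)) :
  0 < a -> 0 < b -> 0 <= r ->
  (forall m n, r ^ 2 <= d2 p (actK a b m n v)) ->
  (forall m n, d2 p (actK a b m n v) = r ^ 2 <-> In (m, n) L) ->
  NoDup L -> L <> nil ->
  is_Kdist a b p v r /\ nsegs a b p v (length L).
Proof.
  intros Ha Hb Hr Hge Heq HL Hne.
  assert (K : is_Kdist a b p v r).
  { split.
    - destruct L as [|[m n] L']; [congruence|].
      exists (actK a b m n v). split; [apply orbit_act|].
      rewrite edist_d2. assert (d2 p (actK a b m n v) = r ^ 2) by (apply Heq; now left).
      rewrite H. now apply sqrt_pow2.
    - intros w [m [n ->]]. rewrite edist_d2. rewrite <- (sqrt_pow2 r Hr).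
      apply sqrt_le_1_alt. apply Hge. }
  split; [exact K|].
  exists r. split; [exact K|].
  exists (map (fun mn => actK a b (fst mn) (snd mn) v) L). split; [|split].
  - apply NoDup_map_NoDup_ForallPairs; auto.
    intros [m n] [m' n'] _ _ E. simpl in E. apply actK_inj in E; auto.
    destruct E; subst; auto.
  - now rewrite length_map.
  - intros w. split.
    + intros [[m [n ->]] Hd]. rewrite edist_d2 in Hd.
      assert (d2 p (actK a b m n v) = r ^ 2).
      { rewrite <- Hd. rewrite pow2_sqrt; auto. unfold d2; apply Rplus_le_le_0_compat; apply pow2_ge_0. }
      apply Heq in H. apply (in_map (fun mn => actK a b (fst mn) (snd mn) v)) in H. exact H.
    + intros H. apply in_map_iff in H. destruct H as [[m n] [<- Hin]].
      split; [apply orbit_act|]. simpl. rewrite edist_d2.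
      apply Heq in Hin. rewrite Hin. now apply sqrt_pow2.
Qed.

Lemma Zcases (m : Z) : (m <= -2 \/ m = -1 \/ m = 0 \/ m = 1 \/ 2 <= m)%Z.
Proof. lia. Qed.

Ltac zc m := destruct (Zcases m) as [Hm|[Hm|[Hm|[Hm|Hm]]]];
  [apply IZR_le in Hm | subst m | subst m | subst m | apply IZR_le in Hm].

Lemma FA_1 b n : 0 < b ->
  b ^ 2 / 4 <= (b / 2 + IZR n * b) ^ 2 /\
  ((b / 2 + IZR n * b) ^ 2 = b ^ 2 / 4 -> n = 0%Z \/ n = (-1)%Z).
Proof.
  intros Hb. zc n; simpl;
  (split; [nra| intro E]); try (now left); try (now right); exfalso; nra.
Qed.

Lemma sq_le1 c d : 0 <= d -> d <= c -> d ^ 2 <= c ^ 2.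
Proof. intros; nra. Qed.
Lemma sq_le2 c d : 0 <= d -> c <= - d -> d ^ 2 <= c ^ 2.
Proof. intros; nra. Qed.
Lemma sq_lt1 c d : 0 <= d -> d < c -> d ^ 2 < c ^ 2.
Proof. intros; nra. Qed.
Lemma sq_lt2 c d : 0 <= d -> c < - d -> d ^ 2 < c ^ 2.
Proof. intros; nra. Qed.

Lemma FA_2 b y0 n : 0 < b -> 0 <= y0 <= b / 4 ->
  (b / 2 - 2 * y0) ^ 2 <= (2 * y0 + b / 2 - IZR n * b) ^ 2 /\
  ((2 * y0 + b / 2 - IZR n * b) ^ 2 = (b / 2 - 2 * y0) ^ 2 -> n = 1%Z \/ (n = 0%Z /\ y0 = 0)).
Proof.
  intros Hb Hy.
  assert (L : forall c, (b / 2 - 2 * y0) ^ 2 < c ^ 2 -> (b / 2 - 2 * y0) ^ 2 <= c ^ 2 /\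
     (c ^ 2 = (b / 2 - 2 * y0) ^ 2 -> n = 1%Z \/ (n = 0%Z /\ y0 = 0))).
  { intros c Hc. split; [lra|intro; exfalso; lra]. }
  zc n.
  - apply L. apply sq_lt1; nra.
  - apply L. apply sq_lt1; lra.
  - destruct (Req_dec y0 0) as [->|Hy0].
    + split; [nra|intros; right; auto].
    + apply L. apply sq_lt1; lra.
  - split; [nra|now left].
  - apply L. apply sq_lt2; nra.
Qed.
Lemma FA_3 a X m : 0 < a -> 0 <= X < a -> Z.even m = true ->
  X ^ 2 <= (X + IZR m * a) ^ 2 /\ ((X + IZR m * a) ^ 2 = X ^ 2 -> m = 0%Z).
Proof.
  intros Ha HX Hev.
  assert (L : forall c, X ^ 2 < c ^ 2 -> X ^ 2 <= c ^ 2 /\ (c ^ 2 = X ^ 2 -> m = 0%Z)).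
  { intros c Hc. split; [lra|intro; exfalso; lra]. }
  zc m; try discriminate.
  - apply L. apply sq_lt2; nra.
  - split; [nra|auto].
  - apply L. apply sq_lt1; nra.
Qed.

Lemma FA_4 a X m : 0 < a -> 0 <= X <= a / 2 -> Z.even m = false ->
  (a - X) ^ 2 <= (X + IZR m * a) ^ 2 /\
  ((X + IZR m * a) ^ 2 = (a - X) ^ 2 -> m = (-1)%Z \/ (m = 1%Z /\ X = 0)).
Proof.
  intros Ha HX Hev.
  assert (L : forall c, (a - X) ^ 2 < c ^ 2 -> (a - X) ^ 2 <= c ^ 2 /\
     (c ^ 2 = (a - X) ^ 2 -> m = (-1)%Z \/ (m = 1%Z /\ X = 0))).
  { intros c Hc. split; [lra|intro; exfalso; lra]. }
  zc m; try discriminate.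
  - apply L. apply sq_lt2; nra.
  - split; [nra|auto].
  - destruct (Req_dec X 0) as [->|HX0].
    + split; [nra|auto].
    + apply L. apply sq_lt1; lra.
  - apply L. apply sq_lt1; nra.
Qed.

Lemma segA_bound a b y0 X m n : 0 < a -> 0 < b -> 0 <= y0 <= b / 4 -> 0 <= X <= a / 2 ->
  (a - X) ^ 2 + (b / 2 - 2 * y0) ^ 2 = X ^ 2 + b ^ 2 / 4 ->
  let D := d2 (0, y0) (actK a b m n (X, y0 + b / 2)) in
  X ^ 2 + b ^ 2 / 4 <= D /\
  (D = X ^ 2 + b ^ 2 / 4 ->
     (m = 0%Z /\ (n = 0%Z \/ n = (-1)%Z)) \/ (m = (-1)%Z /\ n = 1%Z) \/
     (m = 1%Z /\ n = 1%Z /\ X = 0) \/ (m = (-1)%Z /\ n = 0%Z /\ y0 = 0)).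
Proof.
  intros Ha Hb Hy HX Hc D. unfold D, d2, actK, sgnZ; simpl.
  destruct (Z.even m) eqn:Ev.
  - destruct (FA_3 a X m Ha ltac:(lra) Ev) as [A1 A2].
    destruct (FA_1 b n Hb) as [B1 B2].
    replace ((0 - (X + IZR m * a)) ^ 2) with ((X + IZR m * a) ^ 2) by ring.
    replace ((y0 - (y0 + b / 2 + IZR n * b)) ^ 2) with ((b / 2 + IZR n * b) ^ 2) by ring.
    split; [lra|intro E].
    left. split; [apply A2; lra| apply B2; lra].
  - destruct (FA_4 a X m Ha HX Ev) as [A1 A2].
    destruct (FA_2 b y0 n Hb Hy) as [B1 B2].
    replace ((0 - (X + IZR m * a)) ^ 2) with ((X + IZR m * a) ^ 2) by ring.
    replace ((y0 - (- (y0 + b / 2) + IZR n * b)) ^ 2) with ((2 * y0 + b / 2 - IZR n * b) ^ 2) by ring.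
    split; [lra|intro E].
    assert (E1 : (X + IZR m * a) ^ 2 = (a - X) ^ 2) by lra.
    assert (E2 : (2 * y0 + b / 2 - IZR n * b) ^ 2 = (b / 2 - 2 * y0) ^ 2) by lra.
    destruct (A2 E1) as [-> | [-> ->]]; destruct (B2 E2) as [-> | [-> ->]]; try tauto; exfalso; nra.
Qed.
Lemma FB_1 b RW n : 0 < b -> 0 < RW < b / 2 ->
  RW ^ 2 <= (RW + IZR n * b) ^ 2 /\ ((RW + IZR n * b) ^ 2 = RW ^ 2 -> n = 0%Z).
Proof.
  intros Hb HR.
  assert (L : forall c, RW ^ 2 < c ^ 2 -> RW ^ 2 <= c ^ 2 /\ (c ^ 2 = RW ^ 2 -> n = 0%Z)).
  { intros c Hc. split; [lra|intro; exfalso; lra]. }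
  zc n.
  - apply L. apply sq_lt2; nra.
  - apply L. apply sq_lt2; lra.
  - split; [nra|auto].
  - apply L. apply sq_lt1; lra.
  - apply L. apply sq_lt1; nra.
Qed.

Lemma FB_2 b z n : 0 < b -> 0 < z < b / 2 ->
  z ^ 2 <= (b - z - IZR n * b) ^ 2 /\ ((b - z - IZR n * b) ^ 2 = z ^ 2 -> n = 1%Z).
Proof.
  intros Hb HR.
  assert (L : forall c, z ^ 2 < c ^ 2 -> z ^ 2 <= c ^ 2 /\ (c ^ 2 = z ^ 2 -> n = 1%Z)).
  { intros c Hc. split; [lra|intro; exfalso; lra]. }
  zc n.
  - apply L. apply sq_lt1; nra.
  - apply L. apply sq_lt1; lra.
  - apply L. apply sq_lt1; lra.
  - split; [nra|auto].
  - apply L. apply sq_lt2; nra.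
Qed.

Lemma FB_3 a m : 0 < a -> Z.even m = true ->
  0 <= (IZR m * a) ^ 2 /\ ((IZR m * a) ^ 2 = 0 -> m = 0%Z).
Proof.
  intros Ha Ev. split; [nra|intro E].
  assert (IZR m * a = 0) by nra. destruct (Rmult_integral _ _ H); [|lra].
  now apply eq_IZR.
Qed.

Lemma FB_4 a m : 0 < a -> Z.even m = false ->
  a ^ 2 <= (IZR m * a) ^ 2 /\ ((IZR m * a) ^ 2 = a ^ 2 -> m = 1%Z \/ m = (-1)%Z).
Proof.
  intros Ha Ev.
  assert (L : forall c, a ^ 2 < c ^ 2 -> a ^ 2 <= c ^ 2 /\ (c ^ 2 = a ^ 2 -> m = 1%Z \/ m = (-1)%Z)).
  { intros c Hc. split; [lra|intro; exfalso; lra]. }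
  zc m; try discriminate.
  - apply L. apply sq_lt2; nra.
  - split; [nra|auto].
  - split; [nra|auto].
  - apply L. apply sq_lt1; nra.
Qed.

Lemma segW_bound a b y0 RW m n : 0 < a -> 0 < b ->
  0 < RW < b / 2 -> 0 < b - 2 * y0 - RW < b / 2 ->
  a ^ 2 + (b - 2 * y0 - RW) ^ 2 = RW ^ 2 ->
  let D := d2 (0, y0) (actK a b m n (0, y0 + RW)) in
  RW ^ 2 <= D /\
  (D = RW ^ 2 -> (m = 0%Z /\ n = 0%Z) \/ (m = 1%Z /\ n = 1%Z) \/ (m = (-1)%Z /\ n = 1%Z)).
Proof.
  intros Ha Hb HR Hz Hc D. unfold D, d2, actK, sgnZ; simpl.
  destruct (Z.even m) eqn:Ev.
  - destruct (FB_3 a m Ha Ev) as [A1 A2].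
    destruct (FB_1 b RW n Hb HR) as [B1 B2].
    replace ((0 - (0 + IZR m * a)) ^ 2) with ((IZR m * a) ^ 2) by ring.
    replace ((y0 - (y0 + RW + IZR n * b)) ^ 2) with ((RW + IZR n * b) ^ 2) by ring.
    split; [lra|intro E].
    left. split; [apply A2; lra| apply B2; lra].
  - destruct (FB_4 a m Ha Ev) as [A1 A2].
    destruct (FB_2 b (b - 2 * y0 - RW) n Hb Hz) as [B1 B2].
    replace ((0 - (0 + IZR m * a)) ^ 2) with ((IZR m * a) ^ 2) by ring.
    replace ((y0 - (- (y0 + RW) + IZR n * b)) ^ 2) with ((b - (b - 2 * y0 - RW) - IZR n * b) ^ 2) by ring.
    split; [lra|intro E].
    assert (E1 : (IZR m * a) ^ 2 = a ^ 2) by lra.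
    assert (E2 : (b - (b - 2 * y0 - RW) - IZR n * b) ^ 2 = (b - 2 * y0 - RW) ^ 2) by lra.
    destruct (A2 E1) as [-> | ->]; rewrite (B2 E2); tauto.
Qed.
Lemma Kdist_orb a b p q q' r : orbitK a b q q' -> is_Kdist a b p q r -> is_Kdist a b p q' r.
Proof.
  intros O [[w [Hw Hd]] H2]. split.
  - exists w. split; [|auto]. apply orbit_trans with q; [now apply orbit_sym|auto].
  - intros w' Hw'. apply H2. now apply orbit_trans with q'.
Qed.

Lemma nsegs_orb a b p q q' k : orbitK a b q q' -> nsegs a b p q k -> nsegs a b p q' k.
Proof.
  intros O [r [H1 H2]]. exists r. split; [now apply Kdist_orb with q|].
  apply (tr_has_card (fun u => u) (fun u => u) (fun y => orbitK a b q y /\ edist p y = r) _ k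
     (fun u => eq_refl) (fun u => eq_refl)); [|exact H2].
  intros w. split; intros [A B]; split; auto.
  - apply orbit_trans with q'; auto.
  - apply orbit_trans with q; auto. now apply orbit_sym.
Qed.

Lemma assemble a b p Rr cands k N :
  (forall q, (exists w, orbitK a b q w /\ edist p w <= Rr) /\
     ((forall w, orbitK a b q w -> Rr <= edist p w) -> exists v, In v cands /\ equivK a b q v)) ->
  (forall v, In v cands -> is_Kdist a b p v Rr /\ nsegs a b p v k) ->
  ForallOrdPairs (fun u v => ~ equivK a b u v) cands -> length cands = N -> cands <> nil ->
  Fcase a b p N k.
Proof.
  intros Cov Hc Ho Hl Hne.
  assert (Far : forall v, In v cands -> farthest a b p v).
  { intros v Hv. exists Rr. split; [apply Hc, Hv|].
    intros q' r' Hk. destruct (Cov q') as [[w [Hw Hd]] _].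
    destruct Hk as [_ Hk]. specialize (Hk w Hw). lra. }
  assert (Cls : forall q, farthest a b p q -> exists v, In v cands /\ equivK a b q v).
  { intros q [r [Hk Hmax]]. destruct cands as [|v0 l0]; [congruence|].
    assert (Rr <= r) by (apply (Hmax v0); apply Hc; now left).
    apply (Cov q). intros w Hw. destruct Hk as [_ Hk]. specialize (Hk w Hw). lra. }
  split.
  - exists cands. split; [auto|split; [exact Far|split; [exact Ho|exact Cls]]].
  - exists cands. split; [auto|split; [|split; [exact Ho|]]].
    + intros u Hu; split; [now apply Far|now apply Hc].
    + intros u [Hu _]. now apply Cls.
Qed.
Lemma coverA a b y0 X : 0 < a -> 0 < b -> 0 <= y0 <= b / 4 ->
  2 * a * X = a ^ 2 - 2 * y0 * (b - 2 * y0) -> 0 <= X ->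
  forall q, (exists w, orbitK a b q w /\ edist (0, y0) w <= sqrt (X ^ 2 + b ^ 2 / 4)) /\
    ((forall w, orbitK a b q w -> sqrt (X ^ 2 + b ^ 2 / 4) <= edist (0, y0) w) ->
       exists v, In v ((X, y0 + b / 2) :: (a - X, b / 2 - y0) :: nil) /\ equivK a b q v).
Proof.
  intros Ha Hb Hy HX HX0.
  assert (S2 : sqrt (X ^ 2 + b ^ 2 / 4) ^ 2 = X ^ 2 + b ^ 2 / 4) by (apply pow2_sqrt; nra).
  apply (cover_gen a b y0 _ _
    (fun V rho2 => rho2 = X ^ 2 + b ^ 2 / 4 /\
       (V = (a - X, b / 2 - y0) \/ V = (X, y0 + b / 2) \/ V = (a - X, 3 * b / 2 - y0)))); auto.
  - apply sqrt_pos.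
  - intros V rho2 [Hr HV]. rewrite S2. split; [lra|intros _].
    destruct HV as [-> | [-> | ->]].
    + exists (a - X, b / 2 - y0). split; [right; left; auto|apply orbit_refl].
    + exists (X, y0 + b / 2). split; [left; auto|apply orbit_refl].
    + exists (a - X, b / 2 - y0). split; [right; left; auto|].
      apply orbit_sym. exists 0%Z, 1%Z. unfold actK, sgnZ; simpl. f_equal; lra.
  - intros x y Hx Hy'.
    destruct (coverA_rect a b y0 X x y Ha Hb ltac:(lra) ltac:(lra) HX HX0 Hx Hy')
      as [P [V [HP [HV Hd]]]].
    exists P, V, (X ^ 2 + b ^ 2 / 4). auto.
Qed.

Ltac nodup_tac := repeat constructor; simpl; intuition congruence.

Lemma FA1 a b y0 : 0 < a -> 0 < b -> y0 = 0 -> Fcase a b (0, y0) 1 4.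
Proof.
  intros Ha Hb ->.
  set (X := a / 2).
  assert (HX : 2 * a * X = a ^ 2 - 2 * 0 * (b - 2 * 0)) by (unfold X; field).
  assert (S2 : sqrt (X ^ 2 + b ^ 2 / 4) ^ 2 = X ^ 2 + b ^ 2 / 4) by (apply pow2_sqrt; nra).
  pose proof (coverA a b 0 X Ha Hb ltac:(lra) HX ltac:(unfold X; lra)) as Cov.
  assert (E : (a - X, b / 2 - 0) = (X, 0 + b / 2)) by (unfold X; f_equal; field).
  rewrite E in Cov.
  apply (assemble a b (0, 0) (sqrt (X ^ 2 + b ^ 2 / 4)) ((X, 0 + b / 2) :: nil)); auto.
  - intros q. destruct (Cov q) as [C1 C2]. split; auto.
    intros H. destruct (C2 H) as [v [Hv Hq]]. exists v. split; auto.
    simpl in Hv |- *. tauto.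
  - intros v [<- | []].
    apply (seg_gen a b (0, 0) (X, 0 + b / 2) _ ((0, 0) :: (0, -1) :: (-1, 0) :: (-1, 1) :: nil)%Z);
      auto.
    + apply sqrt_pos.
    + intros m n. rewrite S2. apply (segA_bound a b 0 X m n); auto; unfold X; nra.
    + intros m n. rewrite S2. split.
      * intros E1. destruct (segA_bound a b 0 X m n) as [_ B]; auto; try (unfold X; nra).
        destruct (B E1) as [[-> [-> | ->]] | [[-> ->] | [[-> [-> HX0]] | [-> [-> _]]]]];
          simpl; auto 10.
        exfalso. unfold X in HX0. lra.
      * simpl. intros [H|[H|[H|[H|[]]]]]; injection H as <- <-;
          unfold d2, actK, sgnZ, X; simpl; field.
    + nodup_tac.
    + discriminate.
  - constructor; constructor.
  - discriminate.
Qed.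
Lemma FA2 a b y0 : 0 < a -> 0 < b -> 0 < y0 <= b / 4 ->
  2 * y0 * (b - 2 * y0) < a ^ 2 -> Fcase a b (0, y0) 2 3.
Proof.
  intros Ha Hb Hy Hu.
  set (X := (a ^ 2 - 2 * y0 * (b - 2 * y0)) / (2 * a)).
  assert (HX : 2 * a * X = a ^ 2 - 2 * y0 * (b - 2 * y0)) by (unfold X; field; lra).
  assert (HX0 : 0 < X) by (unfold X; apply Rdiv_lt_0_compat; lra).
  assert (HX1 : X < a / 2) by nra.
  assert (Cir : (a - X) ^ 2 + (b / 2 - 2 * y0) ^ 2 = X ^ 2 + b ^ 2 / 4) by nra.
  assert (S2 : sqrt (X ^ 2 + b ^ 2 / 4) ^ 2 = X ^ 2 + b ^ 2 / 4) by (apply pow2_sqrt; nra).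
  pose proof (coverA a b y0 X Ha Hb ltac:(lra) HX ltac:(lra)) as Cov.
  assert (K2 : is_Kdist a b (0, y0) (X, y0 + b / 2) (sqrt (X ^ 2 + b ^ 2 / 4)) /\
               nsegs a b (0, y0) (X, y0 + b / 2) 3).
  { apply (seg_gen a b (0, y0) (X, y0 + b / 2) _ ((0, 0) :: (0, -1) :: (-1, 1) :: nil)%Z);
      auto.
    + apply sqrt_pos.
    + intros m n. rewrite S2. apply (segA_bound a b y0 X m n); auto; lra.
    + intros m n. rewrite S2. split.
      * intros E1. destruct (segA_bound a b y0 X m n) as [_ B]; auto; try lra.
        destruct (B E1) as [[-> [-> | ->]] | [[-> ->] | [[-> [-> HX2]] | [-> [-> HY]]]]];
          simpl; auto 10; exfalso; lra.
      * simpl. intros [H|[H|[H|[]]]]; injection H as <- <-;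
          unfold d2, actK, sgnZ; simpl; nra.
    + nodup_tac.
    + discriminate. }
  set (M := Phi b false true 0 0%Z).
  pose proof (Phi_good a b false true 0 0%Z) as GM. fold M in GM.
  assert (Mp : M (0, y0) = (0, y0)) by (unfold M, Phi, sR; simpl; f_equal; lra).
  assert (OV : orbitK a b (M (X, y0 + b / 2)) (a - X, b / 2 - y0)).
  { exists 1%Z, 1%Z. unfold M, Phi, sR, actK, sgnZ; simpl; f_equal; lra. }
  assert (K1 : is_Kdist a b (0, y0) (a - X, b / 2 - y0) (sqrt (X ^ 2 + b ^ 2 / 4)) /\
               nsegs a b (0, y0) (a - X, b / 2 - y0) 3).
  { destruct K2 as [K2a K2b]. split.
    - apply Kdist_orb with (M (X, y0 + b / 2)); auto. rewrite <- Mp.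
      now apply (tr_Kdist' a b _ _ GM).
    - apply nsegs_orb with (M (X, y0 + b / 2)); auto. rewrite <- Mp.
      now apply (tr_nsegs a b _ _ GM). }
  apply (assemble a b (0, y0) (sqrt (X ^ 2 + b ^ 2 / 4))
           ((X, y0 + b / 2) :: (a - X, b / 2 - y0) :: nil)); auto.
  - intros v [<- | [<- | []]]; auto.
  - constructor; [|constructor; constructor].
    constructor; [|constructor].
    intros [m [n E]]. unfold actK, sgnZ in E. injection E as E1 E2.
    assert (0 < 1 - IZR m < 1) by nra.
    assert (0 < 1 - m < 1)%Z by (split; apply lt_IZR; rewrite minus_IZR; simpl; lra).
    lia.
  - discriminate.
Qed.

Lemma FA3 a b y0 : 0 < a -> 0 < b -> 0 < y0 <= b / 4 ->
  2 * y0 * (b - 2 * y0) = a ^ 2 -> Fcase a b (0, y0) 1 4.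
Proof.
  intros Ha Hb Hy Hu.
  set (X := 0).
  assert (HX : 2 * a * X = a ^ 2 - 2 * y0 * (b - 2 * y0)) by (unfold X; lra).
  assert (Cir : (a - X) ^ 2 + (b / 2 - 2 * y0) ^ 2 = X ^ 2 + b ^ 2 / 4) by (unfold X; nra).
  assert (S2 : sqrt (X ^ 2 + b ^ 2 / 4) ^ 2 = X ^ 2 + b ^ 2 / 4) by (apply pow2_sqrt; nra).
  pose proof (coverA a b y0 X Ha Hb ltac:(lra) HX ltac:(unfold X; lra)) as Cov.
  assert (O12 : orbitK a b (a - X, b / 2 - y0) (X, y0 + b / 2)).
  { apply orbit_sym. exists 1%Z, 1%Z. unfold X, actK, sgnZ; simpl; f_equal; lra. }
  apply (assemble a b (0, y0) (sqrt (X ^ 2 + b ^ 2 / 4)) ((X, y0 + b / 2) :: nil)); auto.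
  - intros q. destruct (Cov q) as [C1 C2]. split; auto.
    intros H. destruct (C2 H) as [v [Hv Hq]]. exists (X, y0 + b / 2). split; [now left|].
    simpl in Hv. destruct Hv as [<- | [<- | []]]; auto.
    unfold equivK in *. now apply orbit_trans with (a - X, b / 2 - y0).
  - intros v [<- | []].
    apply (seg_gen a b (0, y0) (X, y0 + b / 2) _ ((0, 0) :: (0, -1) :: (-1, 1) :: (1, 1) :: nil)%Z);
      auto.
    + apply sqrt_pos.
    + intros m n. rewrite S2. apply (segA_bound a b y0 X m n); auto; unfold X; lra.
    + intros m n. rewrite S2. split.
      * intros E1. destruct (segA_bound a b y0 X m n) as [_ B]; auto; try (unfold X; lra).
        destruct (B E1) as [[-> [-> | ->]] | [[-> ->] | [[-> [-> HX2]] | [-> [-> HY]]]]];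
          simpl; auto 10; exfalso; lra.
      * simpl. intros [H|[H|[H|[H|[]]]]]; injection H as <- <-;
          unfold d2, actK, sgnZ, X; simpl; nra.
    + nodup_tac.
    + discriminate.
  - constructor; constructor.
  - discriminate.
Qed.
Lemma coverB a b y0 RW RW' (cands : list (R * R)) : 0 < a -> 0 < b -> 0 < y0 <= b / 4 ->
  a ^ 2 < 2 * y0 * (b - 2 * y0) ->
  2 * (b - 2 * y0) * RW = a ^ 2 + (b - 2 * y0) ^ 2 ->
  4 * y0 * RW' = a ^ 2 + 4 * y0 ^ 2 ->
  In (0, y0 + RW) cands -> (y0 = b / 4 -> In (0, y0 + b - RW') cands) ->
  forall q, (exists w, orbitK a b q w /\ edist (0, y0) w <= RW) /\
    ((forall w, orbitK a b q w -> RW <= edist (0, y0) w) ->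
       exists v, In v cands /\ equivK a b q v).
Proof.
  intros Ha Hb Hy Hu HW HW' C1 C2.
  assert (RWp : 0 < RW) by nra.
  assert (RWp' : 0 < RW') by nra.
  assert (Hle : RW' <= RW /\ (RW' = RW -> y0 = b / 4)).
  { assert (E : 2 * (b - 2 * y0) * (2 * y0) * (RW - RW') =
                ((b - 2 * y0) - 2 * y0) * (2 * y0 * (b - 2 * y0) - a ^ 2)) by nra.
    split.
    - assert (0 <= ((b - 2 * y0) - 2 * y0) * (2 * y0 * (b - 2 * y0) - a ^ 2)) by nra. nra.
    - intros Eq. rewrite Eq in E. assert ((b - 2 * y0) - 2 * y0 = 0) by nra. lra. }
  apply (cover_gen a b y0 _ _
    (fun V rho2 => (rho2 = RW ^ 2 /\ (V = (a, b - y0 - RW) \/ V = (0, y0 + RW))) \/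
                   (rho2 = RW' ^ 2 /\ (V = (0, y0 + b - RW') \/ V = (a, b - y0 + RW'))))); auto.
  - lra.
  - intros V rho2 [[Hr HV]|[Hr HV]].
    + split; [lra|intros _]. exists (0, y0 + RW). split; auto.
      destruct HV as [-> | ->]; [|apply orbit_refl].
      apply orbit_sym. exists 1%Z, 1%Z. unfold actK, sgnZ; simpl; f_equal; lra.
    + split; [nra|intros E]. assert (RW' = RW) by nra.
      assert (Q : y0 = b / 4) by (apply Hle; auto).
      exists (0, y0 + b - RW'). split; auto.
      destruct HV as [-> | ->]; [apply orbit_refl|].
      apply orbit_sym. exists 1%Z, 2%Z. unfold actK, sgnZ; simpl; f_equal; lra.
  - intros x y Hx Hy'.
    destruct (coverB_rect a b y0 RW RW' x y Ha Hb ltac:(lra) ltac:(lra) HW HW' Hx Hy')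
      as [P [V [rho2 [HP [HV Hd]]]]].
    exists P, V, rho2. split; auto. split; auto. tauto.
Qed.

Lemma segW a b y0 RW : 0 < a -> 0 < b -> 0 < y0 <= b / 4 ->
  a ^ 2 < 2 * y0 * (b - 2 * y0) ->
  2 * (b - 2 * y0) * RW = a ^ 2 + (b - 2 * y0) ^ 2 ->
  is_Kdist a b (0, y0) (0, y0 + RW) RW /\ nsegs a b (0, y0) (0, y0 + RW) 3.
Proof.
  intros Ha Hb Hy Hu HW.
  assert (RWp : 0 < RW) by nra.
  assert (RWb : RW < b / 2) by nra.
  assert (Z1 : 0 < b - 2 * y0 - RW) by nra.
  assert (Z2 : b - 2 * y0 - RW < b / 2) by nra.
  assert (Cir : a ^ 2 + (b - 2 * y0 - RW) ^ 2 = RW ^ 2) by nra.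
  apply (seg_gen a b (0, y0) (0, y0 + RW) _ ((0, 0) :: (1, 1) :: (-1, 1) :: nil)%Z); auto.
  - lra.
  - intros m n. apply (segW_bound a b y0 RW m n); auto; lra.
  - intros m n. split.
    + intros E1. destruct (segW_bound a b y0 RW m n) as [_ B]; auto; try lra.
      destruct (B E1) as [[-> ->] | [[-> ->] | [-> ->]]]; simpl; auto 10.
    + simpl. intros [H|[H|[H|[]]]]; injection H as <- <-;
        unfold d2, actK, sgnZ; simpl; nra.
  - nodup_tac.
  - discriminate.
Qed.

Lemma FB1 a b y0 : 0 < a -> 0 < b -> 0 < y0 < b / 4 ->
  a ^ 2 < 2 * y0 * (b - 2 * y0) -> Fcase a b (0, y0) 1 3.
Proof.
  intros Ha Hb Hy Hu.
  set (RW := (a ^ 2 + (b - 2 * y0) ^ 2) / (2 * (b - 2 * y0))).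
  set (RW' := (a ^ 2 + 4 * y0 ^ 2) / (4 * y0)).
  assert (HW : 2 * (b - 2 * y0) * RW = a ^ 2 + (b - 2 * y0) ^ 2) by (unfold RW; field; lra).
  assert (HW' : 4 * y0 * RW' = a ^ 2 + 4 * y0 ^ 2) by (unfold RW'; field; lra).
  apply (assemble a b (0, y0) RW ((0, y0 + RW) :: nil)); auto.
  - apply (coverB a b y0 RW RW'); auto; try lra; try (now left); intros; exfalso; lra.
  - intros v [<- | []]. apply segW; auto; lra.
  - constructor; constructor.
  - discriminate.
Qed.

Lemma FB2 a b y0 : 0 < a -> 0 < b -> y0 = b / 4 ->
  a ^ 2 < 2 * y0 * (b - 2 * y0) -> Fcase a b (0, y0) 2 3.
Proof.
  intros Ha Hb Hy Hu.
  set (RW := (a ^ 2 + (b - 2 * y0) ^ 2) / (2 * (b - 2 * y0))).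
  set (RW' := (a ^ 2 + 4 * y0 ^ 2) / (4 * y0)).
  assert (HW : 2 * (b - 2 * y0) * RW = a ^ 2 + (b - 2 * y0) ^ 2) by (unfold RW; field; lra).
  assert (HW' : 4 * y0 * RW' = a ^ 2 + 4 * y0 ^ 2) by (unfold RW'; field; lra).
  assert (EQ : RW' = RW) by (unfold RW, RW'; rewrite Hy; field; lra).
  assert (RWp : 0 < RW) by nra.
  assert (RWb : RW < b / 2) by nra.
  destruct (segW a b y0 RW Ha Hb ltac:(lra) Hu HW) as [K2a K2b].
  set (S := Phi b true false 0 1%Z).
  pose proof (Phi_good a b true false 0 1%Z) as GS. fold S in GS.
  assert (Sp : S (0, y0) = (0, y0)) by (unfold S, Phi, sR; simpl; f_equal; lra).
  assert (OV : orbitK a b (S (0, y0 + RW)) (0, y0 + b - RW')).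
  { exists 0%Z, 1%Z. unfold S, Phi, sR, actK, sgnZ; simpl; f_equal; lra. }
  apply (assemble a b (0, y0) RW ((0, y0 + RW) :: (0, y0 + b - RW') :: nil)); auto.
  - apply (coverB a b y0 RW RW'); auto; try lra; try (now left); intros; right; now left.
  - intros v [<- | [<- | []]]; [auto|]. split.
    + apply Kdist_orb with (S (0, y0 + RW)); auto. rewrite <- Sp.
      now apply (tr_Kdist' a b _ _ GS).
    + apply nsegs_orb with (S (0, y0 + RW)); auto. rewrite <- Sp.
      now apply (tr_nsegs a b _ _ GS).
  - constructor; [|constructor; constructor].
    constructor; [|constructor].
    intros [m [n E]]. unfold actK, sgnZ in E. injection E as E1 E2.
    assert (IZR m = 0) by nra. apply eq_IZR in H. subst m. simpl in E2.
    assert (0 < IZR n < 1) by nra.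
    assert (0 < n < 1)%Z by (split; apply lt_IZR; simpl; lra).
    lia.
  - discriminate.
Qed.
Lemma sig_bound b y0 M : 0 < b -> 0 <= y0 <= b / 4 -> y0 ^ 2 <= (y0 - IZR M * b / 2) ^ 2.
Proof.
  intros Hb Hy. destruct (Z.le_gt_cases M 0) as [H|H].
  - apply IZR_le in H. apply sq_le1; nra.
  - assert (1 <= M)%Z by lia. apply IZR_le in H0. apply sq_le2; nra.
Qed.

Lemma sigma_orbit a b q w : on_sigma b q -> orbitK a b q w -> on_sigma b w.
Proof.
  intros [N HN] [m [n ->]]. exists ((if Z.even m then N else - N) + 2 * n)%Z.
  unfold actK, sgnZ; cbn [fst snd]. rewrite HN. destruct (Z.even m);
  rewrite plus_IZR, ?opp_IZR, mult_IZR; field.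
Qed.

Lemma sigma_dist b y0 w x : 0 < b -> 0 <= y0 <= b / 4 -> on_sigma b w ->
  edist (0, y0) w = x -> y0 <= x.
Proof.
  intros Hb Hy [M HM] <-. rewrite edist_d2. unfold d2; simpl. rewrite HM.
  apply Rle_trans with (sqrt (y0 ^ 2)); [rewrite sqrt_pow2; lra|].
  apply sqrt_le_1_alt.
  pose proof (sig_bound b y0 M Hb Hy). pose proof (pow2_ge_0 (0 - fst w)). lra.
Qed.

Lemma dsigma_can a b y0 : 0 < a -> 0 < b -> 0 <= y0 <= b / 4 ->
  is_dsigma a b (0, y0) y0 /\ (forall r, is_dsigma a b (0, y0) r -> r = y0).
Proof.
  intros Ha Hb Hy.
  assert (LB : forall x, (exists q, on_sigma b q /\ is_Kdist a b (0, y0) q x) -> y0 <= x).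
  { intros x [q [Hq [[w [Hw Hd]] _]]]. apply (sigma_dist b y0 w x); auto.
    now apply (sigma_orbit a b q). }
  assert (Ey : exists q, on_sigma b q /\ is_Kdist a b (0, y0) q y0).
  { exists (0, 0). split; [exists 0%Z; simpl; lra|]. split.
    - exists (0, 0). split; [apply orbit_refl|]. rewrite edist_d2. unfold d2; cbn [fst snd].
      replace ((0 - 0) ^ 2 + (y0 - 0) ^ 2) with (y0 ^ 2) by ring. apply sqrt_pow2; lra.
    - intros w Hw. apply (sigma_dist b y0 w); auto.
      apply (sigma_orbit a b (0, 0)); auto. exists 0%Z; simpl; lra. }
  assert (G : is_dsigma a b (0, y0) y0).
  { split; [exact LB|]. intros s Hs. now apply Hs. }
  split; [exact G|].
  intros r [H1 H2]. apply Rle_antisym.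
  - now apply H1.
  - apply H2. exact LB.
Qed.

Definition Concl (a b r : R) (F : nat -> nat -> Prop) : Prop :=
    let lam := 2 * r / b in
    (0 <= lam <= 1 / 2) /\
    (b < 2 * a ->
       (lam = 0 -> F 1%nat 4%nat) /\
       (lam <> 0 -> F 2%nat 3%nat)) /\
    (b = 2 * a ->
       (lam = 0 \/ lam = 1 / 2 -> F 1%nat 4%nat) /\
       (lam <> 0 /\ lam <> 1 / 2 -> F 2%nat 3%nat)) /\
    (b > 2 * a ->
       let lam0 := 1 / 2 - sqrt (1 / 4 - a ^ 2 / b ^ 2) in
       (lam = 0 -> F 1%nat 4%nat) /\
       (0 < lam < lam0 -> F 2%nat 3%nat) /\
       (lam = lam0 -> F 1%nat 4%nat) /\
       (lam0 < lam < 1 / 2 -> F 1%nat 3%nat) /\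
       (lam = 1 / 2 -> F 2%nat 3%nat)).

Lemma Concl_mono a b r (F F' : nat -> nat -> Prop) :
  (forall N k, F N k -> F' N k) -> Concl a b r F -> Concl a b r F'.
Proof.
  intros HF. unfold Concl. cbv zeta. intuition auto.
Qed.

Lemma canon a b y0 : 0 < a -> 0 < b -> 0 <= y0 <= b / 4 ->
  Concl a b y0 (Fcase a b (0, y0)).
Proof.
  intros Ha Hb Hy. unfold Concl. cbv zeta. set (lam := 2 * y0 / b).
  assert (Ey : y0 = lam * b / 2) by (unfold lam; field; lra).
  assert (Hl : 0 <= lam <= 1 / 2).
  { split; apply (Rmult_le_reg_r b); nra. }
  clearbody lam.
  assert (Uv : 2 * y0 * (b - 2 * y0) = b ^ 2 * lam * (1 - lam)) by (rewrite Ey; field).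
  split; [exact Hl|]. split; [|split].
  - intros Hab. split.
    + intros H0. apply FA1; auto. nra.
    + intros H0. apply FA2; auto.
      * split; [|lra]. assert (0 < lam) by lra. nra.
      * nra.
  - intros Hab. split.
    + intros [H0|H0].
      * apply FA1; auto. nra.
      * apply FA3; auto; [split; nra|]. rewrite Uv, H0, Hab. field.
    + intros [H0 H1]. apply FA2; auto.
      * split; [|lra]. assert (0 < lam) by lra. nra.
      * rewrite Uv, Hab. assert (0 < (1 / 2 - lam) ^ 2).
        { assert (lam < 1 / 2) by lra. nra. }
        assert (0 < a ^ 2 * (1 / 2 - lam) ^ 2) by (apply Rmult_lt_0_compat; nra).
        nra.
  - intros Hab.
    assert (Hpos : 0 < 1 / 4 - a ^ 2 / b ^ 2).
    { replace (1 / 4 - a ^ 2 / b ^ 2) with ((b ^ 2 - 4 * a ^ 2) / (4 * b ^ 2)) by (field; lra).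
      apply Rdiv_lt_0_compat; nra. }
    set (s := sqrt (1 / 4 - a ^ 2 / b ^ 2)) in *.
    assert (Hs2 : s ^ 2 = 1 / 4 - a ^ 2 / b ^ 2) by (unfold s; apply pow2_sqrt; lra).
    assert (Hs0 : 0 <= s) by apply sqrt_pos.
    clearbody s.
    assert (Ea : a ^ 2 = b ^ 2 * (1 / 4 - s ^ 2)) by (rewrite Hs2; field; lra).
    assert (0 < a ^ 2 / b ^ 2) by (apply Rdiv_lt_0_compat; nra).
    assert (Hs1 : s < 1 / 2) by nra.
    assert (Key : 2 * y0 * (b - 2 * y0) - a ^ 2 = b ^ 2 * (s ^ 2 - (1 / 2 - lam) ^ 2))
      by (rewrite Uv, Ea; field).
    assert (Hb2 : 0 < b ^ 2) by nra.
    split; [|split; [|split; [|split]]].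
    + intros H0. apply FA1; auto. nra.
    + intros [H0 H1]. apply FA2; auto.
      * split; [|lra]. nra.
      * assert (s ^ 2 < (1 / 2 - lam) ^ 2) by (apply sq_lt1; lra). nra.
    + intros H0. apply FA3; auto.
      * split; [|lra]. assert (0 < lam) by lra. nra.
      * assert (s ^ 2 = (1 / 2 - lam) ^ 2) by (rewrite H0; ring). nra.
    + intros [H0 H1]. apply FB1; auto.
      * split; [assert (0 < lam) by lra; nra|nra].
      * assert ((1 / 2 - lam) ^ 2 < s ^ 2) by (apply sq_lt1; lra). nra.
    + intros H0. apply FB2; auto.
      * nra.
      * assert ((1 / 2 - lam) ^ 2 < s ^ 2) by (rewrite H0; nra). nra.
Qed.
Lemma main_tr a b f g p : goodpair a b f g ->
  ((exists r, is_dsigma a b (f p) r) /\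
   forall r, is_dsigma a b (f p) r -> Concl a b r (Fcase a b (f p))) ->
  ((exists r, is_dsigma a b p r) /\
   forall r, is_dsigma a b p r -> Concl a b r (Fcase a b p)).
Proof.
  intros G [[r Hr] H]. pose proof G as (fg & gf & _).
  pose proof (goodpair_sym _ _ _ _ G) as G'.
  split.
  - exists r. rewrite <- (gf p). now apply (tr_dsigma a b g f G').
  - intros r' Hr'. apply Concl_mono with (Fcase a b (f p)).
    + intros N k HF. rewrite <- (gf p). now apply (tr_Fcase a b g f G').
    + apply H. now apply (tr_dsigma a b f g G).
Qed.

Lemma reduce a b p : 0 < b ->
  exists f g y0, goodpair a b f g /\ f p = (0, y0) /\ 0 <= y0 <= b / 4.
Proof.
  intros Hb. destruct p as [px py].
  destruct (archimed (py / (b / 2))) as [H1 H2].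
  set (j := (up (py / (b / 2)) - 1)%Z).
  assert (Ej : IZR j = IZR (up (py / (b / 2))) - 1) by (unfold j; rewrite minus_IZR; reflexivity).
  assert (E : py = (py / (b / 2)) * (b / 2)) by (field; lra).
  set (z := py / (b / 2)) in *. clearbody z j.
  assert (T1 : IZR j * (b / 2) <= py) by nra.
  assert (T2 : py < IZR j * (b / 2) + b / 2) by nra.
  destruct (Rle_dec (py - IZR j * b / 2) (b / 4)) as [C|C].
  - exists (Phi b true true (- px) (- j)), (Phi b true true (- (sR true * - px)) (if true then (- - j)%Z else (- j)%Z)), (py - IZR j * b / 2).
    split; [apply Phi_good|]. split; [|lra].
    unfold Phi, sR; simpl. rewrite opp_IZR. f_equal; field.
  - exists (Phi b true false (- px) (j + 1)), (Phi b true false (- (sR true * - px)) (if false then (- (j + 1))%Z else (j + 1)%Z)), (b / 2 - (py - IZR j * b / 2)).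
    split; [apply Phi_good|]. split; [|lra].
    unfold Phi, sR; simpl. rewrite plus_IZR. f_equal; field.
Qed.

Theorem mainTheorem4 (a b : R) (p : R * R) :
  0 < a -> 0 < b ->
  (exists r, is_dsigma a b p r) /\
  forall r, is_dsigma a b p r ->
    let lam := 2 * r / b in
    (0 <= lam <= 1 / 2) /\
    (b < 2 * a ->
       (lam = 0 -> Fcase a b p 1 4) /\
       (lam <> 0 -> Fcase a b p 2 3)) /\
    (b = 2 * a ->
       (lam = 0 \/ lam = 1 / 2 -> Fcase a b p 1 4) /\
       (lam <> 0 /\ lam <> 1 / 2 -> Fcase a b p 2 3)) /\
    (b > 2 * a ->
       let lam0 := 1 / 2 - sqrt (1 / 4 - a ^ 2 / b ^ 2) in
       (lam = 0 -> Fcase a b p 1 4) /\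
       (0 < lam < lam0 -> Fcase a b p 2 3) /\
       (lam = lam0 -> Fcase a b p 1 4) /\
       (lam0 < lam < 1 / 2 -> Fcase a b p 1 3) /\
       (lam = 1 / 2 -> Fcase a b p 2 3)).
Proof.
  intros Ha Hb.
  destruct (reduce a b p Hb) as [f [g [y0 [G [Hf Hy]]]]].
  apply (main_tr a b f g p G). rewrite Hf.
  destruct (dsigma_can a b y0 Ha Hb Hy) as [D1 D2].
  split; [now exists y0|].
  intros r Hr. rewrite (D2 r Hr). now apply canon.
Qed.
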